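(* Let $f\in C[0,1]$ (complex-valued), $u\in(0,1]$ and $\rho>0$. If $f(u)\neq0$, then there exist a constant $d>0$ and a sequence $\{\rho_k\}_{k\ge1}$ with $\rho_k\to+\infty$ such that $|\Phi_{f,u}(\rho_k)|>\rho e^{d\rho_k}$ for all $k\ge1$.
   Context: For $f\in C[0,1]$ and $u\in(0,1]$, $\Phi_{f,u}(z)=\int_0^u f(s)e^{(u-s)z}\,ds$ ($z\in\mathbb{C}$). *)

(* Defs.v *)
From Stdlib Require Import Reals.
From Coquelicot Require Export Coquelicot.
Open Scope R_scope.

Definition continuous_on_01 (f : R -> C) : Prop :=
  forall x, 0 <= x <= 1 ->
    forall eps : R, 0 < eps -> exists delta : R, 0 < delta /\
      forall y, 0 <= y <= 1 -> Rabs (y - x) < delta ->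
        Cmod (Cminus (f y) (f x)) < eps.

Definition cexp (z : C) : C :=
  (exp (Re z) * cos (Im z), exp (Re z) * sin (Im z)).

Definition Phi (f : R -> C) (u : R) (z : C) : C :=
  RInt (V := C_R_CompleteNormedModule)
       (fun s => Cmult (f s) (cexp (Cmult (RtoC (u - s)) z))) 0 u.

(* Main.v *)
Require Import Defs.
From Stdlib Require Import Reals.
From Coquelicot Require Import Coquelicot.
From Stdlib Require Import Lra Lia ZArith ClassicalEpsilon Classical.
Open Scope R_scope.

Lemma exp_pow' (x : R) (n : nat) : exp x ^ n = exp (INR n * x).
Proof.
  induction n. simpl. rewrite Rmult_0_l, exp_0; reflexivity.
  rewrite S_INR. simpl. rewrite IHn, <- exp_plus. f_equal; ring.
Qed.

Lemma pow_le_one (x : R) (k : nat) : 0 <= x <= 1 -> x ^ k <= 1.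
Proof.
  intros Hx; induction k. simpl; lra. simpl.
  assert (0 <= x ^ k) by (apply pow_le; lra). nra.
Qed.

Lemma pow_le_decr (x : R) (n k : nat) : 0 <= x <= 1 -> x ^ (n + k) <= x ^ n.
Proof.
  intros Hx. rewrite pow_add.
  assert (0 <= x ^ k <= 1). { split. apply pow_le; lra. apply pow_le_one; lra. }
  assert (0 <= x ^ n) by (apply pow_le; lra). nra.
Qed.

Lemma bernoulli (t : R) (n : nat) : 0 <= t <= 1 -> 1 - INR n * t <= (1 - t) ^ n.
Proof.
  intros Ht; induction n. simpl. lra.
  rewrite S_INR. simpl. assert (0 <= INR n) by apply pos_INR. nra.
Qed.

Lemma pow_le_exp (t : R) (n : nat) : 0 <= t <= 1 -> (1 - t) ^ n <= exp (- (INR n * t)).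
Proof.
  intros Ht. replace (- (INR n * t)) with (INR n * (- t)) by ring.
  rewrite <- exp_pow'. apply pow_incr. split. lra.
  pose proof (exp_ineq1_le (- t)). lra.
Qed.

Lemma onepr_le (r : R) (n : nat) : 0 <= r -> INR n * r <= 1/2 -> (1 + r) ^ n <= 1 + 2 * INR n * r.
Proof.
  intros Hr; induction n; intros H. simpl. lra.
  rewrite S_INR in H |- *. simpl.
  assert (0 <= INR n) by apply pos_INR.
  assert (INR n * r <= 1/2) by nra.
  specialize (IHn H1). nra.
Qed.

Lemma exp_neg_le (x : R) : 0 < x -> exp (- x) <= / x.
Proof.
  intros Hx. rewrite exp_Ropp. apply Rinv_le_contravar. lra.
  pose proof (exp_ineq1_le x). lra.
Qed.

Lemma cont_ex (h : R -> R) a b : (forall x, continuous h x) -> ex_RInt h a b.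
Proof. intros H. apply (ex_RInt_continuous (V:=R_CompleteNormedModule)). intros; apply H. Qed.

Lemma cont_mul (g h : R -> R) : (forall x, continuous g x) -> (forall x, ex_derive h x) ->
  forall x, continuous (fun s => g s * h s) x.
Proof.
  intros Hg Hh x. apply (continuous_mult g h). apply Hg. apply (ex_derive_continuous (K:=R_AbsRing) (V:=R_NormedModule)), Hh.
Qed.

Definition tt (m s : R) := exp (- (m * s)).

Section Ind.
Variable g : R -> R.
Hypothesis Hg : forall x, continuous g x.

Lemma ex_gpoly (m : R) (j n : nat) a b :
  ex_RInt (fun s => g s * (tt m s ^ j * (1 - tt m s) ^ n)) a b.
Proof.
  apply cont_ex. apply cont_mul. exact Hg. intros x. unfold tt. auto_derive. auto.
Qed.

Lemma ex_gpoly2 (m : R) (n : nat) a b :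
  ex_RInt (fun s => g s * ((1 - tt m s) ^ n - 1)) a b.
Proof.
  apply cont_ex. apply cont_mul. exact Hg. intros x. unfold tt. auto_derive. auto.
Qed.

Lemma RInt_minusR (f h : R -> R) a b : ex_RInt f a b -> ex_RInt h a b ->
  RInt (fun x => f x - h x) a b = RInt f a b - RInt h a b.
Proof. intros. exact (RInt_minus f h a b H H0). Qed.

Lemma RInt0 a b : RInt (fun _ : R => 0) a b = 0.
Proof. rewrite RInt_const. apply (scal_zero_r (K:=R_Ring) (V:=R_ModuleSpace)). Qed.

Variables (u m M r : R).
Hypothesis Hr : 0 <= r.
Hypothesis H : forall j : nat, (1 <= j)%nat ->
  Rabs (RInt (fun s => g s * tt m s ^ j) 0 u) <= M * r ^ j.

Lemma ind1 : forall n j, (1 <= j)%nat ->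
  Rabs (RInt (fun s => g s * (tt m s ^ j * (1 - tt m s) ^ n)) 0 u) <= M * r ^ j * (1 + r) ^ n.
Proof.
  induction n; intros j Hj.
  - rewrite (RInt_ext (V:=R_CompleteNormedModule) _ (fun s => g s * tt m s ^ j)). simpl. rewrite Rmult_1_r. now apply H.
    intros; simpl; ring.
  - rewrite (RInt_ext (V:=R_CompleteNormedModule) _ (fun s => g s * (tt m s ^ j * (1 - tt m s) ^ n) - g s * (tt m s ^ (S j) * (1 - tt m s) ^ n))).
    2: { intros; simpl; ring. }
    rewrite RInt_minusR; try apply ex_gpoly.
    eapply Rle_trans. apply Rabs_triang. rewrite Rabs_Ropp.
    eapply Rle_trans. apply Rplus_le_compat. apply IHn; auto. apply IHn; lia.
    simpl. lra.
Qed.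

Lemma ind2 : forall n,
  Rabs (RInt (fun s => g s * ((1 - tt m s) ^ n - 1)) 0 u) <= M * ((1 + r) ^ n - 1).
Proof.
  induction n.
  - rewrite (RInt_ext (V:=R_CompleteNormedModule) _ (fun _ => 0)). rewrite RInt0. rewrite Rabs_R0. cbn [pow]; lra.
    intros; cbn [pow]. unfold Rminus. rewrite Rplus_opp_r, Rmult_0_r; reflexivity.
  - assert (E : forall x, g x * ((1 - tt m x) ^ S n - 1) = g x * ((1 - tt m x) ^ n - 1) - g x * (tt m x ^ 1 * (1 - tt m x) ^ n)).
    { intros; cbn [pow]; ring. }
    rewrite (RInt_ext (V:=R_CompleteNormedModule) _ (fun s => g s * ((1 - tt m s) ^ n - 1) - g s * (tt m s ^ 1 * (1 - tt m s) ^ n))).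
    2: { intros x _. exact (E x). }
    rewrite RInt_minusR; [| apply ex_gpoly2 | apply ex_gpoly].
    eapply Rle_trans. apply Rabs_triang. rewrite Rabs_Ropp.
    eapply Rle_trans. apply Rplus_le_compat. apply IHn. apply ind1; lia.
    cbn [pow]. ring_simplify. lra.
Qed.
End Ind.

Lemma exp_le x y : x <= y -> exp x <= exp y.
Proof. intros [H|H]. left; apply exp_increasing; auto. subst; lra. Qed.

Lemma nat_gt (X : R) : exists N : nat, X < INR N.
Proof.
  destruct (archimed X) as [H1 _]. destruct (Z_le_gt_dec 0 (up X)) as [z|z].
  - exists (Z.to_nat (up X)). rewrite INR_IZR_INZ, Z2Nat.id. lra. exact z.
  - exists 0%nat. apply Z.gt_lt in z. apply IZR_lt in z. simpl. lra.
Qed.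

Lemma cont_pos h x : continuous h x -> 0 < h x ->
  exists eta, 0 < eta /\ forall s, Rabs (s - x) < eta -> h x / 2 < h s.
Proof.
  intros Hc Hp. apply continuity_pt_filterlim in Hc.
  destruct (Hc (h x / 2)) as [alp [Ha Hb]]. lra.
  exists alp; split; auto. intros s Hs.
  destruct (Req_dec s x) as [->|Hne]. lra.
  assert (Hd : Rabs (h s - h x) < h x / 2).
  { apply (Hb s). split. split; [exact I | auto]. exact Hs. }
  apply Rabs_def2 in Hd. lra.
Qed.

Lemma pow_le_decr' (x : R) (n k : nat) : (n <= k)%nat -> 0 <= x <= 1 -> x ^ k <= x ^ n.
Proof. intros Hk Hx. replace k with (n + (k - n))%nat by lia. apply pow_le_decr; auto. Qed.

Lemma RInt_scalR (f : R -> R) a b k : ex_RInt f a b ->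
  RInt (fun x => k * f x) a b = k * RInt f a b.
Proof. intros. exact (RInt_scal f a b k H). Qed.

Lemma RInt_ChaslesR (f : R -> R) a b c : ex_RInt f a b -> ex_RInt f b c ->
  RInt f a b + RInt f b c = RInt f a c.
Proof. intros. exact (RInt_Chasles f a b c H H0). Qed.

Lemma RInt_constR a b c : RInt (fun _ : R => c) a b = (b - a) * c.
Proof. exact (RInt_const a b c). Qed.

Lemma eqR (a b : R) : a = b -> a = b.
Proof. auto. Qed.

Lemma ex_RInt_scalR (f : R -> R) a b k : ex_RInt f a b -> ex_RInt (fun x => k * f x) a b.
Proof. intros. exact (ex_RInt_scal f a b k H). Qed.

Lemma mainR (h : R -> R) (u M : R) : (forall x, continuous h x) -> 0 < u -> 0 < h u ->
  exists d, 0 < d /\ forall R0, ~ (forall rho, R0 <= rho ->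
     Rabs (RInt (fun s => h s * exp ((u - s) * rho)) 0 u) <= M * exp (d * rho)).
Proof.
  intros Hh Hu Hpos.
  set (gam := h u). assert (Hg0 : 0 < gam) by exact Hpos.
  destruct (cont_pos h u (Hh u) Hpos) as [eta [Heta Hnear]].
  destruct (nat_gt (4 * u / eta + 2)) as [p Hp].
  set (A := INR p) in *. assert (HA0 : 0 <= A) by apply pos_INR.
  assert (HA : 4 * u < eta * (A - 2)).
  { assert (eta * (4 * u / eta) = 4 * u) by (field; lra).
    assert (eta * (4 * u / eta) < eta * (A - 2)) by (apply Rmult_lt_compat_l; lra). lra. }
  set (dl := u / (A + 2)).
  assert (Hdl : 0 < dl) by (unfold dl; apply Rdiv_lt_0_compat; lra).
  assert (Hudl : u = (A + 2) * dl) by (unfold dl; field; lra).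
  assert (H4dl : 4 * dl < eta) by nra.
  assert (Ha0 : 0 <= u - 4 * dl) by nra.
  exists (dl / 2). split. lra.
  intros R0 Hb.
  assert (HM : 0 <= M).
  { specialize (Hb R0 (Rle_refl _)). pose proof (Rabs_pos (RInt (fun s => h s * exp ((u - s) * R0)) 0 u)).
    pose proof (exp_pos (dl / 2 * R0)). nra. }
  assert (HL : forall rho, R0 <= rho ->
    Rabs (RInt (fun s => h s * exp (- (rho * s))) 0 u) <= M * exp (- ((u - dl / 2) * rho))).
  { intros rho Hrho. specialize (Hb rho Hrho).
    assert (Hex : ex_RInt (fun s => h s * exp (- (rho * s))) 0 u).
    { apply cont_ex. apply cont_mul. exact Hh. intros x; auto_derive; auto. }
    rewrite (RInt_ext (V:=R_CompleteNormedModule) _ (fun s => exp (u * rho) * (h s * exp (- (rho * s))))) in Hb.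
    2: { intros x _. rewrite (Rmult_comm (exp (u * rho))), Rmult_assoc, <- exp_plus. f_equal. f_equal. ring. }
    rewrite RInt_scalR in Hb by exact Hex.
    rewrite Rabs_mult, Rabs_pos_eq in Hb by (left; apply exp_pos).
    set (I := Rabs _) in *.
    assert (E : exp (- ((u - dl / 2) * rho)) * exp (u * rho) = exp (dl / 2 * rho)).
    { rewrite <- exp_plus. f_equal. ring. }
    pose proof (exp_pos (u * rho)). pose proof (exp_pos (- ((u - dl / 2) * rho))).
    assert (I * exp (u * rho) <= M * exp (- ((u - dl / 2) * rho)) * exp (u * rho)) by (rewrite Rmult_assoc, E; lra).
    nra. }

  set (a0 := u - 4 * dl).
  set (G := RInt (fun s => Rabs (h s)) 0 a0).
  set (K := 4 * (G + 4 * M + dl * gam / 2) / (dl * gam)).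
  destruct (nat_gt (Rmax 2 (Rmax (exp (R0 * dl / 4)) K))) as [N HN].
  set (q := INR N) in *.
  assert (Hq2 : 2 < q) by (pose proof (Rmax_l 2 (Rmax (exp (R0 * dl / 4)) K)); lra).
  assert (HqR : exp (R0 * dl / 4) < q).
  { pose proof (Rmax_l (exp (R0 * dl / 4)) K). pose proof (Rmax_r 2 (Rmax (exp (R0 * dl / 4)) K)). lra. }
  assert (HqK : K < q).
  { pose proof (Rmax_r (exp (R0 * dl / 4)) K). pose proof (Rmax_r 2 (Rmax (exp (R0 * dl / 4)) K)). lra. }
  set (l := ln q).
  assert (Hl : 0 < l). { unfold l. rewrite <- ln_1. apply ln_increasing; lra. }
  assert (Hexpl : exp l = q) by (unfold l; apply exp_ln; lra).
  assert (HlR : R0 * dl / 4 < l).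
  { unfold l. rewrite <- (ln_exp (R0 * dl / 4)). apply ln_increasing. apply exp_pos. exact HqR. }
  set (m := 4 * l / dl).
  assert (Hmdl : m * dl = 4 * l) by (unfold m; field; lra).
  assert (Hm : 0 < m) by (unfold m; apply Rdiv_lt_0_compat; lra).
  assert (HmR : R0 <= m) by nra.
  set (r := exp (- ((u - dl / 2) * m))).
  assert (Hr : 0 <= r) by (left; apply exp_pos).
  assert (Hj : forall j : nat, (1 <= j)%nat ->
     Rabs (RInt (fun s => h s * tt m s ^ j) 0 u) <= M * r ^ j).
  { intros j Hj1.
    assert (HJ : 1 <= INR j) by (apply (le_INR 1); exact Hj1).
    rewrite (RInt_ext (V:=R_CompleteNormedModule) _ (fun s => h s * exp (- ((m * INR j) * s)))).
    2: { intros x _. unfold tt. rewrite exp_pow'. f_equal. f_equal. ring. }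
    unfold r. rewrite exp_pow'.
    replace (INR j * - ((u - dl / 2) * m)) with (- ((u - dl / 2) * (m * INR j))) by ring.
    apply HL. nra. }
  set (n1 := (N ^ (4 * p))%nat).
  set (n2 := (N ^ (4 * p + 4))%nat).
  assert (HN0 : N <> 0%nat). { intros E. unfold q in Hq2. rewrite E in Hq2. simpl in Hq2. lra. }
  assert (Hn12 : (n1 <= n2)%nat) by (apply Nat.pow_le_mono_r; lia).
  assert (En1 : INR n1 = exp (4 * A * l)).
  { unfold n1. rewrite pow_INR. fold q. rewrite <- Hexpl, exp_pow'. f_equal.
    rewrite mult_INR. fold A. replace (INR 4) with 4 by (simpl; ring). ring. }
  assert (En2 : INR n2 = exp ((4 * A + 4) * l)).
  { unfold n2. rewrite pow_INR. fold q. rewrite <- Hexpl, exp_pow'. f_equal.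
    rewrite plus_INR, mult_INR. fold A. replace (INR 4) with 4 by (simpl; ring). ring. }
  assert (Hinvq : exp (- l) = / q) by (rewrite exp_Ropp, Hexpl; reflexivity).
  set (Qf := fun s => (1 - tt m s) ^ n1 - (1 - tt m s) ^ n2).
  assert (HexQ : forall a b, ex_RInt (fun s => h s * Qf s) a b).
  { intros a b. apply cont_ex. apply cont_mul. exact Hh. intros x. unfold Qf, tt. auto_derive. auto. }
  assert (Hup : Rabs (RInt (fun s => h s * Qf s) 0 u) <= 4 * M / q).
  { rewrite (RInt_ext (V:=R_CompleteNormedModule) _ (fun s => h s * ((1 - tt m s) ^ n1 - 1) - h s * ((1 - tt m s) ^ n2 - 1))).
    2: { intros x _. unfold Qf. apply eqR. ring. }
    rewrite RInt_minusR; [| apply ex_gpoly2; exact Hh | apply ex_gpoly2; exact Hh].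
    eapply Rle_trans. apply Rabs_triang. rewrite Rabs_Ropp.
    pose proof (ind2 h Hh u m M r Hj n1) as I1.
    pose proof (ind2 h Hh u m M r Hj n2) as I2.
    assert (Er1 : INR n1 * r = exp (- (6 * l))).
    { rewrite En1. unfold r. rewrite <- exp_plus. f_equal. unfold m. field_simplify. 2: lra.
      rewrite Hudl. field. lra. }
    assert (Er2 : INR n2 * r = exp (- (2 * l))).
    { rewrite En2. unfold r. rewrite <- exp_plus. f_equal. unfold m. field_simplify. 2: lra.
      rewrite Hudl. field. lra. }
    assert (B1 : INR n1 * r <= / q) by (rewrite Er1, <- Hinvq; apply exp_le; lra).
    assert (B2 : INR n2 * r <= / q) by (rewrite Er2, <- Hinvq; apply exp_le; lra).
    assert (Hiq : / q <= 1 / 2) by (apply Rle_trans with (/ 2); [apply Rinv_le_contravar; lra | lra]).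
    pose proof (onepr_le r n1 Hr ltac:(lra)).
    pose proof (onepr_le r n2 Hr ltac:(lra)).
    assert (4 * M / q = M * (2 * / q) + M * (2 * / q)) by (field; lra).
    nra. }

  assert (Ht : forall s, 0 <= s -> 0 < tt m s <= 1).
  { intros s Hs. unfold tt. split. apply exp_pos. rewrite <- exp_0. apply exp_le. nra. }
  assert (Hn1t : forall s, INR n1 * tt m s = exp (4 * A * l - m * s)).
  { intros s. rewrite En1. unfold tt. rewrite <- exp_plus. f_equal; ring. }
  assert (Hn2t : forall s, INR n2 * tt m s = exp ((4 * A + 4) * l - m * s)).
  { intros s. rewrite En2. unfold tt. rewrite <- exp_plus. f_equal; ring. }
  assert (HQ : forall s, 0 <= s -> 0 <= Qf s /\ Qf s <= exp (- (INR n1 * tt m s)) /\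
      1 - INR n1 * tt m s - exp (- (INR n2 * tt m s)) <= Qf s).
  { intros s Hs. specialize (Ht s Hs). unfold Qf.
    pose proof (pow_le_decr' (1 - tt m s) n1 n2 Hn12 ltac:(lra)).
    pose proof (pow_le_exp (tt m s) n1 ltac:(lra)).
    pose proof (pow_le_exp (tt m s) n2 ltac:(lra)).
    pose proof (bernoulli (tt m s) n1 ltac:(lra)).
    pose proof (pow_le (1 - tt m s) n2 ltac:(lra)).
    lra. }
  assert (Hexq : exp (- q) <= / q) by (apply exp_neg_le; lra).
  set (w1 := u - 7 * dl / 4).
  set (w2 := u - 5 * dl / 4).
  assert (Hma0 : m * a0 = 4 * l * (A - 2)) by (unfold a0; rewrite Hudl; nra).
  assert (Hmw1 : m * w1 = (4 * A + 1) * l) by (unfold w1; rewrite Hudl; nra).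
  assert (Hmw2 : m * w2 = (4 * A + 3) * l) by (unfold w2; rewrite Hudl; nra).
  assert (HexA : ex_RInt (fun s => Rabs (h s)) 0 a0).
  { apply cont_ex. intros x. apply continuous_Rabs_comp. apply Hh. }
  assert (P1 : - / q * G <= RInt (fun s => h s * Qf s) 0 a0).
  { unfold G. rewrite <- RInt_scalR by exact HexA.
    apply RInt_le. unfold a0; lra. apply ex_RInt_scalR, HexA. apply HexQ.
    intros s [Hs1 Hs2]. destruct (HQ s ltac:(lra)) as [Q0 [Q1 _]].
    assert (Hge : q <= INR n1 * tt m s).
    { rewrite Hn1t, <- Hexpl. apply exp_le.
      assert (m * s <= m * a0) by (apply Rmult_le_compat_l; lra). lra. }
    assert (Qf s <= / q).
    { apply Rle_trans with (exp (- (INR n1 * tt m s))). exact Q1.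
      apply Rle_trans with (exp (- q)). apply exp_le; lra. exact Hexq. }
    assert (0 < / q) by (apply Rinv_0_lt_compat; lra).
    destruct (Rle_dec 0 (h s)) as [Hp0|Hp0].
    - rewrite Rabs_pos_eq by exact Hp0. nra.
    - rewrite Rabs_left by lra. nra. }
  assert (P2 : 0 <= RInt (fun s => h s * Qf s) a0 w1).
  { rewrite <- (RInt0 a0 w1). apply RInt_le. unfold w1, a0; lra. apply cont_ex; intros; apply continuous_const. apply HexQ.
    intros s [Hs1 Hs2]. destruct (HQ s ltac:(unfold a0 in *; lra)) as [Q0 _].
    assert (gam / 2 < h s) by (apply Hnear; unfold w1, a0 in *; rewrite Rabs_left by lra; lra).
    cbv beta; nra. }
  assert (P4 : 0 <= RInt (fun s => h s * Qf s) w2 u).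
  { rewrite <- (RInt0 w2 u). apply RInt_le. unfold w2; lra. apply cont_ex; intros; apply continuous_const. apply HexQ.
    intros s [Hs1 Hs2]. destruct (HQ s ltac:(unfold w2 in *; lra)) as [Q0 _].
    assert (gam / 2 < h s) by (apply Hnear; unfold w2 in *; rewrite Rabs_left by lra; lra).
    nra. }
  assert (P3 : (w2 - w1) * (gam / 2 * (1 - 2 * / q)) <= RInt (fun s => h s * Qf s) w1 w2).
  { rewrite <- RInt_constR. apply RInt_le. unfold w1, w2; lra. apply cont_ex; intros; apply continuous_const. apply HexQ.
    intros s [Hs1 Hs2]. destruct (HQ s ltac:(unfold w1 in *; lra)) as [Q0 [_ Q2]].
    assert (gam / 2 < h s) by (apply Hnear; unfold w1, w2 in *; rewrite Rabs_left by lra; lra).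

    assert (B1 : INR n1 * tt m s <= / q).
    { rewrite Hn1t, <- Hinvq. apply exp_le.
      assert (m * w1 <= m * s) by (apply Rmult_le_compat_l; lra). lra. }
    assert (B2 : q <= INR n2 * tt m s).
    { rewrite Hn2t, <- Hexpl. apply exp_le.
      assert (m * s <= m * w2) by (apply Rmult_le_compat_l; lra). lra. }
    assert (exp (- (INR n2 * tt m s)) <= / q).
    { apply Rle_trans with (exp (- q)). apply exp_le; lra. exact Hexq. }
    assert (/ q < 1 / 2) by (apply Rlt_le_trans with (/ 2); [apply Rinv_lt_contravar; lra | lra]).
    assert (1 - 2 * / q <= Qf s) by lra.
    nra. }
  assert (Hsplit : RInt (fun s => h s * Qf s) 0 u =
     RInt (fun s => h s * Qf s) 0 a0 + RInt (fun s => h s * Qf s) a0 w1 +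
     RInt (fun s => h s * Qf s) w1 w2 + RInt (fun s => h s * Qf s) w2 u).
  { rewrite !RInt_ChaslesR; auto. }
  assert (Hle : RInt (fun s => h s * Qf s) 0 u <= 4 * M / q) by (pose proof (Rle_abs (RInt (fun s => h s * Qf s) 0 u)); lra).
  assert (HK : K * (dl * gam) = 4 * (G + 4 * M + dl * gam / 2)) by (unfold K; field; fold gam; nra).
  assert (Hdg : 0 < dl * gam) by (fold gam in Hpos; nra).
  assert (HqK' : K * (dl * gam) < q * (dl * gam)) by nra.
  assert (Hw : w2 - w1 = dl / 2) by (unfold w1, w2; field).
  rewrite Hw in P3.
  assert (Hqq : q * / q = 1) by (field; lra).
  assert (X : - / q * G + dl / 2 * (gam / 2 * (1 - 2 * / q)) <= 4 * M / q) by lra.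
  assert (X2 : q * (- / q * G + dl / 2 * (gam / 2 * (1 - 2 * / q))) <= q * (4 * M / q)) by (apply Rmult_le_compat_l; lra).
  replace (q * (- / q * G + dl / 2 * (gam / 2 * (1 - 2 * / q)))) with (- G + q * (dl * gam) / 4 - dl * gam / 2) in X2 by (field; lra).
  replace (q * (4 * M / q)) with (4 * M) in X2 by (field; lra).
  lra.
Qed.

Definition clamp (u s : R) := Rmax 0 (Rmin u s).

Lemma clamp_bounds u s : 0 <= u -> 0 <= clamp u s <= u.
Proof. intros Hu. unfold clamp, Rmax, Rmin. repeat destruct Rle_dec; lra. Qed.

Lemma clamp_id u s : 0 <= s <= u -> clamp u s = s.
Proof. intros Hs. unfold clamp, Rmax, Rmin. repeat destruct Rle_dec; lra. Qed.

Lemma clamp_lip u x y : 0 <= u -> Rabs (clamp u y - clamp u x) <= Rabs (y - x).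
Proof.
  intros Hu. unfold clamp, Rmax, Rmin.
  repeat destruct Rle_dec; unfold Rabs; repeat destruct Rcase_abs; lra.
Qed.

Lemma im_le_Cmod (z : C) : Rabs (snd z) <= Cmod z.
Proof.
  unfold Cmod. rewrite <- sqrt_Rsqr_abs. apply sqrt_le_1_alt. unfold Rsqr.
  pose proof (pow2_ge_0 (fst z)). simpl. lra.
Qed.

Lemma fst_le_Cmod (z : C) : Rabs (fst z) <= Cmod z.
Proof. exact (re_le_Cmod z). Qed.

Lemma cont_comb (f : R -> C) (u a b : R) : continuous_on_01 f -> 0 < u <= 1 ->
  forall x, continuous (fun s => fst (f (clamp u s)) * a + snd (f (clamp u s)) * b) x.
Proof.
  intros Hf Hu x. apply (proj1 (continuity_pt_filterlim _ x)).
  unfold continuity_pt, continue_in, limit1_in, limit_in. intros eps Heps.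
  set (K := Rabs a + Rabs b + 1).
  assert (HK : 0 < K) by (unfold K; pose proof (Rabs_pos a); pose proof (Rabs_pos b); lra).
  pose proof (clamp_bounds u x ltac:(lra)) as Bx.
  destruct (Hf (clamp u x) ltac:(lra) (eps / K) ltac:(apply Rdiv_lt_0_compat; lra)) as [dl [Hdl Hy]].
  exists dl. split; auto. intros y [_ Hyx]. simpl in Hyx |- *. unfold R_dist in *.
  pose proof (clamp_bounds u y ltac:(lra)) as By.
  pose proof (clamp_lip u x y ltac:(lra)).
  specialize (Hy (clamp u y) ltac:(lra) ltac:(lra)).
  set (z := Cminus (f (clamp u y)) (f (clamp u x))) in *.
  assert (E : fst (f (clamp u y)) * a + snd (f (clamp u y)) * b - (fst (f (clamp u x)) * a + snd (f (clamp u x)) * b)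
     = fst z * a + snd z * b).
  { unfold z, Cminus, Cplus, Copp. simpl. ring. }
  rewrite E.
  pose proof (fst_le_Cmod z). pose proof (im_le_Cmod z).
  pose proof (Rabs_pos (fst z)). pose proof (Rabs_pos (snd z)).
  pose proof (Rabs_pos a). pose proof (Rabs_pos b).
  eapply Rle_lt_trans. apply Rabs_triang. rewrite !Rabs_mult.
  assert (Cmod z * K < eps / K * K) by (apply Rmult_lt_compat_r; lra).
  replace (eps / K * K) with eps in H6 by (field; lra).
  unfold K in *. nra.
Qed.

Lemma cexp_real a b : cexp (Cmult (RtoC a) (RtoC b)) = RtoC (exp (a * b)).
Proof.
  unfold cexp, Cmult, RtoC, Re, Im. cbn [fst snd].
  replace (a * 0 + 0 * b) with 0 by ring. replace (a * b - 0 * 0) with (a * b) by ring.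
  rewrite cos_0, sin_0. f_equal; ring.
Qed.

Lemma CS a b x y : Rabs (a * x + b * y) <= sqrt (a ^ 2 + b ^ 2) * sqrt (x ^ 2 + y ^ 2).
Proof.
  rewrite <- sqrt_mult_alt by nra. rewrite <- sqrt_Rsqr_abs. apply sqrt_le_1_alt.
  unfold Rsqr. assert (0 <= (a*y - b*x)^2) by apply pow2_ge_0.
  assert ((a ^ 2 + b ^ 2) * (x ^ 2 + y ^ 2) - (a * x + b * y) * (a * x + b * y) = (a*y - b*x)^2) by ring.
  lra.
Qed.

Lemma RInt_plusR (f g : R -> R) a b : ex_RInt f a b -> ex_RInt g a b ->
  RInt (fun x => f x + g x) a b = RInt f a b + RInt g a b.
Proof. intros. exact (RInt_plus f g a b H H0). Qed.

Section Fin.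
Variables (f : R -> C) (u : R).
Hypothesis Hf : continuous_on_01 f.
Hypothesis Hu : 0 < u <= 1.

Lemma cont_fst x : continuous (fun s => fst (f (clamp u s))) x.
Proof.
  apply (continuous_ext (fun s => fst (f (clamp u s)) * 1 + snd (f (clamp u s)) * 0)).
  intros; apply eqR; ring. apply cont_comb; auto.
Qed.

Lemma cont_snd x : continuous (fun s => snd (f (clamp u s))) x.
Proof.
  apply (continuous_ext (fun s => fst (f (clamp u s)) * 0 + snd (f (clamp u s)) * 1)).
  intros; apply eqR; ring. apply cont_comb; auto.
Qed.

Lemma ex1 rho : ex_RInt (fun s => fst (f (clamp u s)) * exp ((u - s) * rho)) 0 u.
Proof. apply cont_ex, cont_mul. apply cont_fst. intros x; auto_derive; auto. Qed.
Lemma ex2 rho : ex_RInt (fun s => snd (f (clamp u s)) * exp ((u - s) * rho)) 0 u.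
Proof. apply cont_ex, cont_mul. apply cont_snd. intros x; auto_derive; auto. Qed.

Lemma Phi_real rho : Phi f u (RtoC rho) =
  (RInt (fun s => fst (f (clamp u s)) * exp ((u - s) * rho)) 0 u,
   RInt (fun s => snd (f (clamp u s)) * exp ((u - s) * rho)) 0 u).
Proof.
  unfold Phi.
  rewrite (RInt_ext (V:=C_R_CompleteNormedModule) _ (fun s => Cmult (f (clamp u s)) (RtoC (exp ((u - s) * rho))))).
  2: { intros x Hx. rewrite Rmin_left, Rmax_right in Hx by lra. rewrite clamp_id by lra. rewrite cexp_real. reflexivity. }
  apply (is_RInt_unique (V:=C_R_CompleteNormedModule)).
  apply (is_RInt_fct_extend_pair (U:=R_NormedModule) (V:=R_NormedModule)).
  - apply (is_RInt_ext (V:=R_NormedModule) (fun s => fst (f (clamp u s)) * exp ((u - s) * rho))).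
    intros x _. unfold Cmult, RtoC. cbn [fst snd]. apply eqR; ring.
    apply (RInt_correct (V:=R_CompleteNormedModule)). apply ex1.
  - apply (is_RInt_ext (V:=R_NormedModule) (fun s => snd (f (clamp u s)) * exp ((u - s) * rho))).
    intros x _. unfold Cmult, RtoC. cbn [fst snd]. apply eqR; ring.
    apply (RInt_correct (V:=R_CompleteNormedModule)). apply ex2.
Qed.
End Fin.

Theorem lemma4p6 (f : R -> C) (u rho : R) :
  continuous_on_01 f ->
  0 < u <= 1 ->
  0 < rho ->
  f u <> RtoC 0 ->
  exists (d : R) (rhos : nat -> R),
    0 < d /\
    is_lim_seq rhos p_infty /\
    (forall k : nat, Cmod (Phi f u (RtoC (rhos k))) > rho * exp (d * rhos k)).
Proof.
  intros Hf Hu Hrho Hfu.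
  set (al := fst (f u)). set (be := snd (f u)).
  set (h := fun s => fst (f (clamp u s)) * al + snd (f (clamp u s)) * be).
  assert (Hh : forall x, continuous h x) by (apply cont_comb; auto).
  assert (Hne : al <> 0 \/ be <> 0).
  { destruct (Req_dec al 0) as [E1|E1]; destruct (Req_dec be 0) as [E2|E2]; auto.
    exfalso. apply Hfu. unfold al, be in *. destruct (f u) as [a b]. simpl in *. subst. reflexivity. }
  assert (Hhu : 0 < h u).
  { unfold h. rewrite clamp_id by lra. fold al be.
    destruct Hne as [H|H]; [pose proof (Rsqr_pos_lt al H) | pose proof (Rsqr_pos_lt be H)];
    unfold Rsqr in *; nra. }
  assert (Hcm : Cmod (f u) = sqrt (al ^ 2 + be ^ 2)) by reflexivity.
  destruct (mainR h u (rho * Cmod (f u)) Hh (proj1 Hu) Hhu) as [d [Hd Hnot]].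
  assert (Hk : forall k : nat, exists r, INR k <= r /\ Cmod (Phi f u (RtoC r)) > rho * exp (d * r)).
  { intros k. apply NNPP; intro Hno. apply (Hnot (INR k)). intros r Hr.
    assert (Hle : Cmod (Phi f u (RtoC r)) <= rho * exp (d * r)).
    { apply Rnot_gt_le; intro Hgt; apply Hno; exists r; auto. }
    rewrite Phi_real in Hle by auto.
    set (I1 := RInt (fun s => fst (f (clamp u s)) * exp ((u - s) * r)) 0 u) in *.
    set (I2 := RInt (fun s => snd (f (clamp u s)) * exp ((u - s) * r)) 0 u) in *.
    assert (E : RInt (fun s => h s * exp ((u - s) * r)) 0 u = al * I1 + be * I2).
    { rewrite (RInt_ext (V:=R_CompleteNormedModule) _ (fun s => al * (fst (f (clamp u s)) * exp ((u - s) * r)) + be * (snd (f (clamp u s)) * exp ((u - s) * r)))).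
      2: { intros x _. unfold h. apply eqR; ring. }
      rewrite RInt_plusR. rewrite !RInt_scalR. reflexivity.
      apply ex2; auto. apply ex1; auto. apply ex_RInt_scalR, ex1; auto. apply ex_RInt_scalR, ex2; auto. }
    rewrite E.
    eapply Rle_trans. apply (CS al be I1 I2). rewrite <- Hcm.
    change (sqrt (I1 ^ 2 + I2 ^ 2)) with (Cmod (I1, I2)).
    pose proof (Cmod_ge_0 (f u)).
    assert (Cmod (f u) * Cmod (I1, I2) <= Cmod (f u) * (rho * exp (d * r))) by (apply Rmult_le_compat_l; auto).
    lra. }
  exists d, (fun k => proj1_sig (constructive_indefinite_description _ (Hk k))).
  split; auto. split.
  - apply (is_lim_seq_le_p_loc INR). exists 0%nat. intros n _.
    cbv beta. destruct (proj2_sig (constructive_indefinite_description _ (Hk n))) as [Hx _]. exact Hx.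
    apply is_lim_seq_INR.
  - intros k. cbv beta. destruct (proj2_sig (constructive_indefinite_description _ (Hk k))) as [_ Hx]. exact Hx.
Qed.
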